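(* Let $T$ be a monoidal monad on $\mathbf{Set}$, let $n\ge 1$, and let $\Sigma$ be a signature containing an $n$-ary operation symbol $f$. Then $T$ preserves the equation $f(x,\dots,x)=x$ if and only if $T$ is $n$-relevant.
   Context: A monoidal monad on $\mathbf{Set}$ is a monad with natural $\psi_{X,Y}\colon TX\times TY\to T(X\times Y)$ making it lax monoidal with $\psi^0=\eta_1$ and with $\eta,\mu$ monoidal; $\psi^n$ is its $n$-ary version. The lifting $\widehat T\mathcal A$ of a $\Sigma$-algebra on $A$ has carrier $TA$ and operations $T\sigma_{\mathcal A}\circ\psi^{\mathrm{ar}(\sigma)}$; $T$ preserves an equation if $\widehat T\mathcal A$ satisfies it whenever $\mathcal A$ does. $T$ is $n$-relevant if $\psi^n\circ\Delta^n_{TA}=T\Delta^n_A$ for all sets $A$, where $\Delta^n_X\colon X\to X^n$ is the diagonal (equivalently $\psi^n\circ\langle T\pi_1,\dots,T\pi_n\rangle=\mathrm{id}$). *)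

(* Defs.v *)
Record monoidal_monad := {
  T : Type -> Type;
  fmap : forall A B : Type, (A -> B) -> T A -> T B;
  eta : forall A : Type, A -> T A;
  mu : forall A : Type, T (T A) -> T A;
  psi : forall A B : Type, T A * T B -> T (A * B);
  fmap_id : forall A (t : T A), fmap A A (fun x => x) t = t;
  fmap_comp : forall A B C (f : A -> B) (g : B -> C) (t : T A),
      fmap A C (fun x => g (f x)) t = fmap B C g (fmap A B f t);
  eta_nat : forall A B (f : A -> B) (x : A), fmap A B f (eta A x) = eta B (f x);
  mu_nat : forall A B (f : A -> B) (t : T (T A)),
      fmap A B f (mu A t) = mu B (fmap (T A) (T B) (fmap A B f) t);
  mu_eta_l : forall A (t : T A), mu A (eta (T A) t) = t;
  mu_eta_r : forall A (t : T A), mu A (fmap A (T A) (eta A) t) = t;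
  mu_assoc : forall A (t : T (T (T A))),
      mu A (mu (T A) t) = mu A (fmap (T (T A)) (T A) (mu A) t);
  psi_nat : forall A B C D (f : A -> C) (g : B -> D) (a : T A) (b : T B),
      psi C D (fmap A C f a, fmap B D g b)
      = fmap (A * B) (C * D) (fun p => (f (fst p), g (snd p))) (psi A B (a, b));
  psi_assoc : forall A B C (a : T A) (b : T B) (c : T C),
      fmap ((A * B) * C) (A * (B * C))
           (fun p => (fst (fst p), (snd (fst p), snd p)))
           (psi (A * B) C (psi A B (a, b), c))
      = psi A (B * C) (a, psi B C (b, c));
  psi_unit_l : forall A (a : T A),
      fmap (unit * A) A snd (psi unit A (eta unit tt, a)) = a;
  psi_unit_r : forall A (a : T A),
      fmap (A * unit) A fst (psi A unit (a, eta unit tt)) = a;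
  eta_monoidal : forall A B (a : A) (b : B),
      psi A B (eta A a, eta B b) = eta (A * B) (a, b);
  mu_monoidal : forall A B (x : T (T A)) (y : T (T B)),
      mu (A * B) (fmap (T A * T B) (T (A * B)) (psi A B) (psi (T A) (T B) (x, y)))
      = psi A B (mu A x, mu B y)
}.

Fixpoint vec (A : Type) (n : nat) : Type :=
  match n with
  | O => unit
  | S m => (A * vec A m)%type
  end.

Fixpoint diag (A : Type) (n : nat) : A -> vec A n :=
  match n as k return A -> vec A k with
  | O => fun _ => tt
  | S m => fun x => (x, diag A m x)
  end.

Fixpoint psin (M : monoidal_monad) (A : Type) (n : nat) : vec (T M A) n -> T M (vec A n) :=
  match n as k return vec (T M A) k -> T M (vec A k) with
  | O => fun _ => eta M unit tt
  | S m => fun v => psi M A (vec A m) (fst v, psin M A m (snd v))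
  end.

Record signature := { op : Type; arity : op -> nat }.

Record algebra (S : signature) := {
  carrier : Type;
  interp : forall o : op S, vec carrier (arity S o) -> carrier
}.
Arguments carrier {S} _.
Arguments interp {S} _ _ _.

Definition lift (M : monoidal_monad) (S : signature) (Alg : algebra S) : algebra S :=
  {| carrier := T M (carrier Alg);
     interp := fun o v =>
       fmap M (vec (carrier Alg) (arity S o)) (carrier Alg) (interp Alg o)
            (psin M (carrier Alg) (arity S o) v) |}.

Definition sat_idem (S : signature) (f : op S) (Alg : algebra S) : Prop :=
  forall x : carrier Alg, interp Alg f (diag (carrier Alg) (arity S f) x) = x.

Definition preserves_idem (M : monoidal_monad) (S : signature) (f : op S) : Prop :=
  forall Alg : algebra S, sat_idem S f Alg -> sat_idem S f (lift M S Alg).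

Definition n_relevant (M : monoidal_monad) (n : nat) : Prop :=
  forall (A : Type) (t : T M A),
    psin M A n (diag (T M A) n t) = fmap M A (vec A n) (diag A n) t.

(* Main.v *)
Require Import Defs.
From Stdlib Require Import FunctionalExtensionality Eqdep_dec PeanoNat.

Section H.
Variable M : monoidal_monad.

Lemma fmap_ext A B (f g : A -> B) t : (forall x, f x = g x) -> fmap M A B f t = fmap M A B g t.
Proof. intro H. replace f with g; [reflexivity|]. symmetry; apply functional_extensionality; exact H. Qed.

Fixpoint vmap (A B : Type) (h : A -> B) (n : nat) : vec A n -> vec B n :=
  match n as k return vec A k -> vec B k with
  | O => fun _ => tt
  | S m => fun v => (h (fst v), vmap A B h m (snd v))
  end.

Lemma vmap_diag A B (h : A -> B) n x : vmap A B h n (diag A n x) = diag B n (h x).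
Proof. induction n; simpl; [reflexivity| now rewrite IHn]. Qed.

Lemma vmap_comp A B C (h : A -> B) (g : B -> C) n v :
  vmap B C g n (vmap A B h n v) = vmap A C (fun x => g (h x)) n v.
Proof. induction n; simpl; [reflexivity| now rewrite IHn]. Qed.

Lemma vmap_ext A B (h g : A -> B) n v : (forall x, h x = g x) -> vmap A B h n v = vmap A B g n v.
Proof. intro E; induction n; simpl; [reflexivity| now rewrite IHn, E]. Qed.

Lemma psin_nat A B (h : A -> B) n v :
  psin M B n (vmap _ _ (fmap M A B h) n v) = fmap M _ _ (vmap A B h n) (psin M A n v).
Proof.
  induction n; simpl.
  - rewrite eta_nat. reflexivity.
  - rewrite IHn, psi_nat. apply fmap_ext. intros [a w]; reflexivity.
Qed.

Fixpoint dpick (A : Type) (n : nat) : vec (vec A n) n -> vec A n :=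
  match n as k return vec (vec A k) k -> vec A k with
  | O => fun _ => tt
  | S m => fun v => (fst (fst v), dpick A m (vmap _ _ snd m (snd v)))
  end.

Lemma dpick_diag A n w : dpick A n (diag _ n w) = w.
Proof.
  induction n; simpl. - destruct w; reflexivity.
  - rewrite vmap_diag, IHn. destruct w; reflexivity.
Qed.

Lemma dpick_vmap A n v : dpick A n (vmap _ _ (diag A n) n v) = v.
Proof.
  induction n; simpl. - destruct v; reflexivity.
  - rewrite vmap_comp. simpl. rewrite (vmap_ext _ _ _ (diag A n)) by reflexivity.
    rewrite IHn. destruct v; reflexivity.
Qed.

Fixpoint vseq (X : Type) (k : nat) : vec (option X) k -> option (vec X k) :=
  match k as j return vec (option X) j -> option (vec X j) with
  | O => fun _ => Some tt
  | S m => fun v => match fst v, vseq X m (snd v) with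
                    | Some a, Some r => Some (a, r)
                    | _, _ => None end
  end.

Lemma vseq_diag_some X k w : vseq X k (diag _ k (Some w)) = Some (diag X k w).
Proof. induction k; simpl; [reflexivity| now rewrite IHk]. Qed.

Lemma vseq_diag_none X k : 1 <= k -> vseq X k (diag _ k None) = None.
Proof. destruct k; simpl; [intro H; inversion H | reflexivity]. Qed.

Lemma vseq_vmap X k v : vseq X k (vmap _ _ Some k v) = Some v.
Proof. induction k; simpl. - destruct v; reflexivity. - rewrite IHk. destruct v; reflexivity. Qed.

Definition gopt A n (v : vec (option (vec A n)) n) : option (vec A n) :=
  option_map (dpick A n) (vseq _ n v).

End H.

Theorem theorem5 (M : monoidal_monad) (n : nat) (Hn : 1 <= n)
  (S : signature) (f : op S) (Hf : arity S f = n) :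
  preserves_idem M S f <-> n_relevant M n.
Proof.
  subst n. split.
  - intros HP A t.
    set (k := arity S f) in *.
    set (C := option (vec A k)).
    set (Alg := {| carrier := C;
                   interp := fun o v => match Nat.eq_dec (arity S o) k with
                     | left e => gopt A k (eq_rect _ (vec C) v _ e)
                     | right _ => None end |} : algebra S).
    assert (Hs : sat_idem S f Alg).
    { intro x. simpl. destruct (Nat.eq_dec (arity S f) k) as [e|ne]; [|exfalso; apply ne; reflexivity].
      rewrite (UIP_dec Nat.eq_dec e eq_refl). simpl.
      unfold gopt. destruct x as [w|].
      - rewrite vseq_diag_some. simpl. now rewrite dpick_diag.
      - rewrite vseq_diag_none by exact Hn. reflexivity. }
    specialize (HP Alg Hs (fmap M _ _ (fun a => Some (diag A k a)) t)).
    simpl in HP.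
    set (P := psin M A k (diag _ k t)).
    assert (E : fmap M _ _ (@Some _) P = fmap M _ _ (fun a => Some (diag A k a)) t).
    { rewrite <- HP.
      rewrite (fmap_ext M _ _ _ (gopt A k)).
      2:{ intro v. destruct (Nat.eq_dec (arity S f) k) as [e|ne]; [|exfalso; apply ne; reflexivity].
          rewrite (UIP_dec Nat.eq_dec e eq_refl). reflexivity. }
      rewrite <- vmap_diag, psin_nat, <- fmap_comp.
      apply fmap_ext. intro v. unfold gopt.
      rewrite <- (vmap_comp _ _ _ (diag A k) (@Some _)).
      rewrite vseq_vmap. simpl. now rewrite dpick_vmap. }
    set (r := fun o : option (vec A k) => match o with Some v => eta M _ v | None => P end).
    apply (f_equal (fun z => mu M _ (fmap M _ _ r z))) in E.
    rewrite <- !fmap_comp in E. simpl in E.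
    rewrite mu_eta_r in E. rewrite E.
    rewrite (fmap_comp M _ _ _ (diag A k) (eta M _)). apply mu_eta_r.
  - intros HR Alg Hs x. simpl. rewrite HR, <- fmap_comp.
    rewrite (fmap_ext M _ _ _ (fun y => y)) by (intro; apply Hs).
    apply fmap_id.
Qed.
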